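(* Let $n\geq 1$ and let $i,j\geq 0$ be integers. Let $W_{n,i,j}$ be the set of triply rooted trees on $[n]$ in which the depth of the second root is $i$ and the depth of the third root is $j$. Then \[ |W_{n,i,j}|=\sum_{d=0}^{\min(i,j)}\frac{(i+j-d+1)\, n!}{(n-i-j+d-1)!}\,n^{\,n-i-j+d-2}, \] with the convention that $1/m!=0$ for negative integers $m$.
   Context: A triply rooted tree on $[n]=\{1,\dots,n\}$ is a labeled tree with vertex set $[n]$ together with three distinguished vertices $r_1,r_2,r_3$ (first, second, third root), not necessarily distinct. The depth of a vertex $v$ is the number of edges on the unique path from the first root $r_1$ to $v$. *)

(* Defs.v *)
From mathcomp Require Import all_boot all_order all_algebra.
From mathcomp Require Import boolp.
Set Implicit Arguments. Unset Strict Implicit. Unset Printing Implicit Defensive.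
Import Order.TTheory GRing.Theory Num.Theory.

(* Vertex set [n] is represented by 'I_n (labels 0..n-1).
   A graph on [n] is given by its edge set: a set of 2-element subsets. *)
Section Trees.
Variable n : nat.

Definition adj (E : {set {set 'I_n}}) : rel 'I_n :=
  fun x y => [set x; y] \in E.

Definition simple_graph (E : {set {set 'I_n}}) : Prop :=
  forall e, e \in E -> #|e| = 2.

Definition connected (E : {set {set 'I_n}}) : Prop :=
  forall x y : 'I_n, connect (adj E) x y.

Definition acyclic (E : {set {set 'I_n}}) : Prop :=
  forall c : seq 'I_n, uniq c -> 3 <= size c -> ~~ cycle (adj E) c.

Definition is_tree (E : {set {set 'I_n}}) : Prop :=
  [/\ simple_graph E, connected E & acyclic E].

(* the (unique, in a tree) path from r to v has d edges *)
Definition has_depth (E : {set {set 'I_n}}) (r v : 'I_n) (d : nat) : Prop :=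
  exists p : seq 'I_n,
    [/\ path (adj E) r p, last r p = v, uniq (r :: p) & size p = d].

(* triply rooted trees (E, r1, r2, r3) with depth(r2) = i, depth(r3) = j *)
Definition W (i j : nat) :
  {set {set {set 'I_n}} * 'I_n * 'I_n * 'I_n} :=
  [set x | `[< is_tree x.1.1.1 /\ has_depth x.1.1.1 x.1.1.2 x.1.2 i
                              /\ has_depth x.1.1.1 x.1.1.2 x.2 j >] ].
End Trees.

Definition inv_fact (m : int) : rat :=
  match m with Posz k => (k`!%:R)^-1 | Negz _ => 0 end.

Local Open Scope ring_scope.
Definition W_formula (n i j : nat) : rat :=
  \sum_(0 <= d < (minn i j).+1)
     let m : int := n%:Z - i%:Z - j%:Z + d%:Z - 1 in
     (i + j - d + 1)%N%:R * n`!%:R * inv_fact m * (n%:R ^ (m - 1)).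

(* Main.v *)
Require Import Defs.
From mathcomp Require Import all_boot all_order all_algebra.
From mathcomp Require Import boolp zify ring.
Set Implicit Arguments. Unset Strict Implicit. Unset Printing Implicit Defensive.


Lemma set2_eqP (T : finType) (x y a b : T) : a != b ->
  ([set x; y] == [set a; b]) = ((x == a) && (y == b)) || ((x == b) && (y == a)).
Proof.
move=> ab; apply/eqP/idP => [H|]; last first.
  by case/orP => /andP[/eqP-> /eqP->] //; exact: setUC.
have xin : x \in [set a; b] by rewrite -H set21.
have yin : y \in [set a; b] by rewrite -H set22.
have ain : a \in [set x; y] by rewrite H set21.
have bin : b \in [set x; y] by rewrite H set22.
move: xin yin ain bin; rewrite !in_set2.
case/orP => /eqP ->; case/orP => /eqP ->; rewrite ?eqxx //= ?orbb ?orbT ?andbT //.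
  by move=> _ /eqP E; rewrite E eqxx in ab.
by move=> /eqP E _; rewrite E eqxx in ab.
Qed.

Lemma adj_sym m (E : {set {set 'I_m}}) : symmetric (adj E).
Proof. by move=> x y; rewrite /adj setUC. Qed.

Lemma seq_argmax (T : eqType) (f : T -> nat) (s : seq T) : s != [::] ->
  exists2 x, x \in s & forall z, z \in s -> f z <= f x.
Proof.
elim: s => // a s IH _; case: s IH => [|b s] IH.
  by exists a; [exact: mem_head | move=> z; rewrite mem_seq1 => /eqP->].
have [x xs Hx] := IH isT.
case: (leqP (f a) (f x)) => H.
  exists x; first by rewrite inE xs orbT.
  by move=> z; rewrite inE => /orP[/eqP->//|]; apply: Hx.
exists a; first exact: mem_head.
by move=> z; rewrite inE => /orP[/eqP->//|/Hx]; lia.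
Qed.

Section Depth.
Variable n : nat.
Implicit Types (p : {ffun 'I_n -> 'I_n}) (r v x y : 'I_n).

Definition rootedP p r := p r = r /\ forall v, exists k, iter k p v = r.
Definition isdepth p r v a := iter a p v = r /\ forall b, b < a -> iter b p v <> r.

Lemma isdepth_uniq p r v a b : isdepth p r v a -> isdepth p r v b -> a = b.
Proof.
move=> [Ha Ha'] [Hb Hb']; case: (ltngtP a b) => // H.
- by case: (Hb' _ H).
- by case: (Ha' _ H).
Qed.

Definition Dp p r v : nat :=
  match pselect (exists k, iter k p v == r) with
  | left H => ex_minn H | right _ => 0 end.

Lemma DpP p r v : (exists k, iter k p v = r) -> isdepth p r v (Dp p r v).
Proof.
move=> [k Hk]; rewrite /Dp; case: pselect => [H|H]; last first.
  by case: H; exists k; apply/eqP.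
case: ex_minnP => m /eqP Hm Hmin; split => // b Hb Hbr.
by move: (Hmin b (introT eqP Hbr)); rewrite leqNgt Hb.
Qed.

Lemma isdepth0 p r v : isdepth p r v 0 <-> v = r.
Proof. by split=> [[]//|->]; split. Qed.

Lemma isdepth_par p r v a : v != r -> isdepth p r v a ->
  0 < a /\ isdepth p r (p v) a.-1.
Proof.
move=> vr [H1 H2]; case: a H1 H2 => [|a] H1 H2 /=; first by move: vr; rewrite -H1 eqxx.
split=> //; split; first by rewrite -iterSr.
by move=> b Hb; rewrite -iterSr; apply: H2.
Qed.

Lemma isdepth_chd p r v a : v != r -> isdepth p r (p v) a -> isdepth p r v a.+1.
Proof.
move=> vr [H1 H2]; split; first by rewrite iterSr.
case=> [|b] Hb /=; first by move/eqP: vr.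
by rewrite -iterS iterSr; apply: H2.
Qed.

Section Rooted.
Variables (p : {ffun 'I_n -> 'I_n}) (r : 'I_n).
Hypothesis rp : rootedP p r.
Local Notation D := (Dp p r).

Lemma Dd v : isdepth p r v (D v).
Proof. by case: rp => _ H; apply: DpP. Qed.

Lemma Dr : D r = 0.
Proof. by apply: (isdepth_uniq (Dd r)); split. Qed.

Lemma D0 v : D v = 0 -> v = r.
Proof. by move=> H; have := Dd v; rewrite H => /isdepth0. Qed.

Lemma DS v : v != r -> D v = (D (p v)).+1.
Proof. by move=> vr; apply: (isdepth_uniq (Dd v)); apply: isdepth_chd (Dd _). Qed.

Lemma pneq v : v != r -> p v != v.
Proof. by move=> vr; apply/eqP => H; have := DS vr; rewrite H; lia. Qed.

Lemma isdepthD v a : isdepth p r v a -> D v = a.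
Proof. by apply: isdepth_uniq (Dd v). Qed.


Definition Ep : {set {set 'I_n}} := [set [set v; p v] | v in [set v | v != r]].

Lemma adjEp x y :
  adj Ep x y = ((x != r) && (y == p x)) || ((y != r) && (x == p y)).
Proof.
rewrite /adj /Ep; apply/imsetP/idP => [[v]|].
  rewrite inE => vr /eqP; rewrite set2_eqP; last by rewrite eq_sym pneq.
  by case/orP => /andP[/eqP-> /eqP->]; rewrite vr eqxx ?orbT.
case/orP => /andP[xr /eqP ->].
  by exists x; rewrite ?inE.
by exists y; rewrite ?inE // setUC.
Qed.

Lemma adj_max u w : adj Ep u w -> D w <= D u -> w = p u.
Proof.
rewrite adjEp => /orP[/andP[_ /eqP]//|/andP[wr /eqP ->]].
by rewrite (DS wr); lia.
Qed.

Lemma conn_root x : connect (adj Ep) x r.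
Proof.
move Hm: (D x) => m; elim: m x Hm => [|m IH] x Hm.
  by rewrite (D0 Hm) connect0.
have xr: x != r by apply/eqP => E; move: Hm; rewrite E Dr.
apply: connect_trans (connect1 _) (IH (p x) _).
  by rewrite adjEp xr eqxx.
by move: Hm; rewrite (DS xr); case.
Qed.

Lemma Ep_connected : connected Ep.
Proof.
move=> x y; apply: connect_trans (conn_root x) _.
by rewrite (sym_connect_sym (@adj_sym _ _)); exact: conn_root.
Qed.

Lemma Ep_simple : simple_graph Ep.
Proof. by move=> e /imsetP[v]; rewrite inE => vr ->; rewrite cards2 eq_sym pneq. Qed.

Lemma Ep_acyclic : acyclic Ep.
Proof.
move=> c Uc Sc; apply/negP => Cc.
have c0: c != [::] by case: c Sc {Uc Cc}.
have [x xc Hx] := seq_argmax D c0.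
case: (rot_to xc) => k s' Hrot.
have Cs : cycle (adj Ep) (x :: s') by rewrite -Hrot rot_cycle.
have Us : uniq (x :: s') by rewrite -Hrot rot_uniq.
have Ss : 3 <= size (x :: s') by rewrite -Hrot size_rot.
have Hs : forall z, z \in x :: s' -> D z <= D x by move=> z; rewrite -Hrot mem_rot; apply: Hx.
clear Hrot; case: s' Cs Us Ss Hs => [|y1 [|y2 s'']] //= Cs Us _ Hs.
move/and3P: Cs => [e1 _]; rewrite rcons_path => /andP[_ e2].
have h1 : y1 = p x by apply: adj_max e1 (Hs _ _); rewrite !inE eqxx orbT.
rewrite adj_sym in e2.
have h2 : last y2 s'' = p x by apply: adj_max e2 (Hs _ _); have := mem_last y2 s''; rewrite !inE => ->; rewrite !orbT.
move/and4P: Us => [_ /negP H _ _]; apply: H.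
by rewrite h1 -h2 mem_last.
Qed.

Lemma depth_path q a : path (adj Ep) a q -> uniq (a :: q) -> p a \notin q ->
  D (last a q) = D a + size q.
Proof.
elim: q a => [|x1 q IH] a /=; first by rewrite addn0.
move=> /andP[Hax Hpath] /andP[aq Uq] Hpa.
have x1pa : x1 != p a by apply: contra Hpa => /eqP->; exact: mem_head.
move: Hax; rewrite adjEp (negbTE x1pa) andbF /= => /andP[x1r /eqP apx].
rewrite (IH x1 Hpath Uq); last by rewrite -apx; apply: contra aq => H; rewrite inE H orbT.
by rewrite apx (DS x1r) addSn addnS.
Qed.

Lemma depth_exists d v : isdepth p r v d -> exists q,
  [/\ path (adj Ep) r q, last r q = v, uniq (r :: q), size q = d &
      forall z, z \in r :: q -> D z <= d].
Proof.
elim: d v => [|d IH] v Hv.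
  move/isdepth0: Hv => ->; exists [::]; split => // z; rewrite mem_seq1 => /eqP->.
  by rewrite Dr.
have vr : v != r by apply/eqP => E; case: Hv => _ /(_ 0 isT); rewrite E.
have [_ Hpv] := isdepth_par vr Hv.
have [q [Hp Hl Hu Hs Hz]] := IH _ Hpv.
have Dv : D v = d.+1 by apply: isdepthD.
exists (rcons q v); split.
- by rewrite rcons_path Hp Hl adjEp vr eqxx orbT.
- by rewrite last_rcons.
- rewrite -rcons_cons rcons_uniq Hu andbT; apply/negP => /Hz; rewrite Dv; lia.
- by rewrite size_rcons Hs.
- move=> z; rewrite -rcons_cons mem_rcons inE => /orP[/eqP->|/Hz]; rewrite ?Dv //; lia.
Qed.

Lemma hasdepth_Ep v d : has_depth Ep r v d <-> isdepth p r v d.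
Proof.
split.
  case=> q [Hp Hl Hu Hs].
  have Hpr : p r \notin q by case: rp => -> _; case/andP: Hu.
  by have := depth_path Hp Hu Hpr; rewrite Hl Dr add0n Hs => <-; exact: Dd.
move/depth_exists => [q [Hp Hl Hu Hs _]]; by exists q; split.
Qed.

End Rooted.

Lemma Ep_inj p p' r : rootedP p r -> rootedP p' r -> Ep p r = Ep p' r -> p = p'.
Proof.
move=> rp rp' E; apply/ffunP => v.
case: (v =P r) => [->|/eqP vr]; first by rewrite (proj1 rp) (proj1 rp').
have Ds : forall x, Dp p r x = Dp p' r x.
  move=> x; symmetry; apply: (isdepthD rp'); apply/(hasdepth_Ep rp'); rewrite -E.
  by apply/(hasdepth_Ep rp); exact: Dd.
have : adj (Ep p' r) v (p v) by rewrite -E adjEp // vr eqxx.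
rewrite adjEp // => /orP[/andP[_ /eqP ->]//| /andP[pvr /eqP Hv]].
by have := DS rp vr; have := DS rp' pvr; rewrite -Hv !Ds; lia.
Qed.

Lemma Ep_surj (E : {set {set 'I_n}}) r : is_tree E ->
  exists p, rootedP p r /\ Ep p r = E.
Proof.
case=> Hs Hc Ha.
have Hex : forall v, exists d, `[< exists q, path (adj E) r q /\ last r q = v /\ size q = d >].
  move=> v; have /connectP [q Hq ->] := Hc r v.
  by exists (size q); apply/asboolP; exists q.
have [dist Hdist] : exists dist : 'I_n -> nat, forall v,
    (exists q, path (adj E) r q /\ last r q = v /\ size q = dist v) /\
    (forall q, path (adj E) r q -> last r q = v -> dist v <= size q).
  apply: (fin_all_exists (P := fun v d => (exists q, path (adj E) r q /\ last r q = v /\ size q = d) /\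
    (forall q, path (adj E) r q -> last r q = v -> d <= size q))) => v.
  case: (ex_minnP (Hex v)) => m /asboolP Hm Hmin; exists m; split => // q Hq Hl.
  by apply: Hmin; apply/asboolP; exists q.
have dr : dist r = 0 by apply/eqP; rewrite -leqn0; apply: (proj2 (Hdist r) [::]).
have d0 : forall v, dist v = 0 -> v = r.
  move=> v H; have [[q [_ [Hl Hsz]]] _] := Hdist v.
  by move: Hsz; rewrite H; case: q Hl => // Hl _; rewrite -Hl.
have Hpar : forall v, exists u, v != r -> adj E u v /\ (dist u).+1 = dist v.
  move=> v; case: (v =P r) => [_|/eqP vr]; first by exists r.
  have [[q [Hq [Hl Hsz]]] _] := Hdist v.
  case: q Hq Hl Hsz => [|a q0]; first by move=> _ /= Hrv; move: vr; rewrite -Hrv eqxx.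
  rewrite lastI rcons_path last_rcons size_rcons => /andP[Hq' Hz] Hl Hsz.
  move: Hz Hsz; rewrite Hl; set q' := belast a q0 => Hz Hsz.
  exists (last r q') => _; split => //.
  have h1 := proj2 (Hdist (last r q')) q' Hq' erefl.
  have [[qu [Hqu [Hlu Hszu]]] _] := Hdist (last r q').
  have h2 : dist v <= size (rcons qu v).
    by apply: (proj2 (Hdist v)); rewrite ?last_rcons // rcons_path Hqu Hlu.
  by move: h2; rewrite size_rcons Hszu; lia.
have [pf Hpf] := fin_all_exists Hpar.
pose p := [ffun v => if v == r then r else pf v].
have pr : p r = r by rewrite ffunE eqxx.
have pv : forall v, v != r -> p v = pf v by move=> v vr; rewrite ffunE (negbTE vr).
have rp : rootedP p r.
  split => // v; exists (dist v).
  move Hm: (dist v) => m; elim: m v Hm => [|m IH] v Hm; first exact: d0.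
  have vr : v != r by apply/eqP => E'; move: Hm; rewrite E' dr.
  rewrite iterSr; apply: IH; rewrite pv //; have [_ ] := Hpf v vr; rewrite Hm; by move=> [].
have sub : forall a b, adj (Ep p r) a b -> adj E a b.
  move=> a b; rewrite (adjEp rp) => /orP[]/andP[ar /eqP ->].
    by rewrite adj_sym pv //; case: (Hpf a ar).
  by rewrite pv //; case: (Hpf b ar).
exists p; split => //; apply/setP => e; apply/idP/idP.
  by case/imsetP => v; rewrite inE => vr ->; apply: sub; rewrite (adjEp rp) vr eqxx.
move=> eE; have /cards2P [x [y [xy ee]]] := introT eqP (Hs e eE); subst e.
case Hxy: (adj (Ep p r) x y); first by [].
exfalso; have /connectP [q0 Hq0 Hy] := Ep_connected rp x y; subst y.
case: (shortenP Hq0) xy Hxy eE => q Hq Uq _ xy Hxy eE.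
case: q Hq Uq xy Hxy eE => [|z [|z2 q]] Hq Uq xy Hxy eE.
- by rewrite eqxx in xy.
- by move: Hq => /= /andP[H _]; rewrite H in Hxy.
have := Ha _ Uq isT; rewrite /cycle rcons_path (sub_path sub Hq) /= adj_sym.
by rewrite /adj eE.
Qed.

Definition TR i j : {set {ffun 'I_n -> 'I_n} * 'I_n * 'I_n * 'I_n} :=
  [set y | `[< rootedP y.1.1.1 y.1.1.2 /\ isdepth y.1.1.1 y.1.1.2 y.1.2 i /\
               isdepth y.1.1.1 y.1.1.2 y.2 j >] ].

Definition Phi (y : {ffun 'I_n -> 'I_n} * 'I_n * 'I_n * 'I_n) :=
  (Ep y.1.1.1 y.1.1.2, y.1.1.2, y.1.2, y.2).

Lemma card_W_TR i j : #|W n i j| = #|TR i j|.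
Proof.
have -> : W n i j = Phi @: TR i j.
  apply/setP => [[[[E r1] r2] r3]]; rewrite inE /=; apply/asboolP/imsetP.
    case=> Ht [H2 H3]; have [p [rp Ep']] := Ep_surj r1 Ht.
    exists (p, r1, r2, r3); last by rewrite /Phi /= Ep'.
    rewrite inE; apply/asboolP => /=; split => //.
    by split; apply/(hasdepth_Ep rp); rewrite Ep'.
  case=> [[[[p r1'] r2'] r3']]; rewrite inE => /asboolP /= [rp [H2 H3]] [-> -> -> ->].
  split; first by split; [exact: Ep_simple | exact: Ep_connected | exact: Ep_acyclic].
  by split; apply/(hasdepth_Ep rp).
apply: card_in_imset => [[[[p r1] r2] r3]] [[[[p' r1'] r2'] r3']].
rewrite !inE => /asboolP[rp _] /asboolP[rp' _] [E e1 e2 e3]; subst.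
by move: rp rp' E => /= rp rp' E; rewrite (Ep_inj rp rp' E).
Qed.

End Depth.


Lemma card_part (T U : finType) (X : {set T}) (P : {set U}) (f : T -> U) :
  {in X, forall x, f x \in P} -> #|X| = \sum_(u in P) #|[set x in X | f x == u]|.
Proof.
move=> H; rewrite -sum1_card (partition_big f (mem P)) //=.
by apply: eq_bigr => u _; rewrite -sum1_card; apply: eq_bigl => x; rewrite inE.
Qed.

Lemma sum_subsets (T : finType) (A : {set T}) (G : nat -> nat) :
  \sum_(B in powerset A) G #|B| = \sum_(t < #|A|.+1) 'C(#|A|, t) * G t.
Proof.
rewrite (partition_big (fun B : {set T} => inord #|B| : 'I_#|A|.+1) predT) //=.
apply: eq_bigr => t _.
rewrite (eq_bigr (fun _ => G t)); last first.
  move=> B /andP[HB /eqP <-]; rewrite inordK // ltnS subset_leq_card // -powersetE.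
  by []. rewrite -cards_draws -sum_nat_const; apply: eq_bigl => B; rewrite !inE.
case sub: (B \subset A) => //=; apply/eqP/eqP => [<-|H]; last first.
  by apply: val_inj; rewrite /= H inordK.
by rewrite /= inordK // ltnS subset_leq_card.
Qed.

Definition Gf a k t := if t == 0 then 0 else
      k ^ t * (if a - t == 0 then 1 else t * a ^ (a - t).-1).

Lemma acyc_identity a k : 0 < a ->
  \sum_(t < a.+1) 'C(a, t) * Gf a k t = k * (a + k) ^ a.-1.
Proof.
case: a => // a _; rewrite big_ord_recl /Gf /= muln0 add0n expnDn big_distrr /=.
apply: eq_bigr => [[s /= Hs]] _; rewrite subSS.
case: (ltngtP s a) => [lt|gt|->]; last 2 first.
- by move: Hs; rewrite ltnS leqNgt gt.
- by rewrite subnn eqxx !binn expnS; lia.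
have H := mul_bin_diag a.+1 s; rewrite /= in H.
have sa : a - s != 0 by rewrite subn_eq0 -ltnNge.
rewrite (negbTE sa) -[a - s]prednK ?lt0n // expnS.
set e := _ ^ (a - s).-1; set C1 := 'C(a.+1, s.+1); set C0 := 'C(a, s).
rewrite expnS; set ks := k ^ s.
rewrite /bump /= add1n.
transitivity (k * ks * e * (s.+1 * C1)); first by ring.
by rewrite -H; ring.
Qed.

Section Acyc.
Variable n : nat.
Implicit Types (A S T : {set 'I_n}) (g h : {ffun 'I_n -> 'I_n}).

Definition acycP A S g :=
  [/\ forall v, v \notin A -> g v = v,
      forall v, v \in A -> g v \in A :|: S &
      forall v, v \in A -> exists k, iter k g v \in S].

Definition Acyc A S : {set {ffun 'I_n -> 'I_n}} := [set g | `[< acycP A S g >] ].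

Lemma inAcyc A S g : (g \in Acyc A S) = `[< acycP A S g >].
Proof. by rewrite inE. Qed.

Definition Tg A S g := [set v in A | g v \in S].

Definition Fam T S : {set {ffun 'I_n -> 'I_n}} :=
  [set h : {ffun 'I_n -> 'I_n} | [forall v, if v \in T then h v \in S else h v == v]].

Lemma card_Fam T S : #|Fam T S| = #|S| ^ #|T|.
Proof.
pose F := fun v : 'I_n => if v \in T then mem S else mem (pred1 v).
have -> : #|Fam T S| = #|(family F : simpl_pred {ffun 'I_n -> 'I_n})|.
  apply: eq_card => h; rewrite inE; apply/forallP/familyP => H v; have := H v;
  by rewrite /F; case: (v \in T).
rewrite card_family foldrE big_map big_enum /= -prod_nat_const [RHS]big_mkcond /=.
by apply: eq_bigr => v _; rewrite /F; case: (v \in T) => //; rewrite card1.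
Qed.

Definition merge T (x : {ffun 'I_n -> 'I_n} * {ffun 'I_n -> 'I_n}) : {ffun 'I_n -> 'I_n} :=
  [ffun v => if v \in T then x.1 v else x.2 v].


Lemma fiber_eq A S T : [disjoint A & S] -> T \subset A ->
  [set g in Acyc A S | Tg A S g == T] = merge T @: setX (Fam T S) (Acyc (A :\: T) T).
Proof.
move=> dAS TA; apply/setP => g; rewrite !inE; apply/andP/imsetP.
  case=> /asboolP [g1 g2 g3] /eqP HT.
  have Tv : forall v, (v \in T) = (v \in A) && (g v \in S) by move=> v; rewrite -HT inE.
  have gA : forall v, v \in A -> v \notin T -> g v \in A.
    move=> v vA vT; have := g2 v vA; rewrite inE => /orP[//|gS].
    by move: vT; rewrite Tv vA gS.
  exists ([ffun v => if v \in T then g v else v], [ffun v => if v \in T then v else g v]).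
    rewrite in_setX; apply/andP; split.
      rewrite inE; apply/forallP => v; rewrite !ffunE; case vT: (v \in T) => //.
      by move: vT; rewrite Tv => /andP[].
    rewrite inE; apply/asboolP; split.
    - move=> v; rewrite inE negb_and negbK ffunE; case: (v \in T) => //= vA; exact: g1.
    - move=> v; rewrite inE ffunE => /andP[vT vA]; rewrite (negbTE vT).
      by rewrite !inE gA // orbC; case: (g v \in T).
    - move=> v; rewrite inE => /andP[_ vA]; have [k Hk] := g3 v vA.
      elim: k v vA Hk => [|k IH] v vA Hk.
        by rewrite /= (disjointFr dAS vA) in Hk.
      case vT: (v \in T); first by exists 0.
      have Hk' : iter k g (g v) \in S by rewrite -iterSr.
      have [m Hm] := IH (g v) (gA v vA (negbT vT)) Hk'.
      by exists m.+1; rewrite iterSr ffunE vT.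
  by apply/ffunP => v; rewrite !ffunE /=; case: (v \in T).
case=> [[h g']]; rewrite in_setX /= => /andP[hF g'A] ->.
rewrite inE in hF; move/forallP: hF => hF.
rewrite inE in g'A; move/asboolP: g'A => [g1 g2 g3].
have mT : forall v, v \in T -> merge T (h, g') v \in S.
  by move=> v vT; have := hF v; rewrite vT ffunE vT.
have mN : forall v, v \notin T -> merge T (h, g') v = g' v.
  by move=> v vT; rewrite ffunE (negbTE vT).
have g'A : forall v, v \in A -> v \notin T -> g' v \in A.
  move=> v vA vT; have := g2 v; rewrite !inE vT vA => /(_ isT) /orP[/andP[]//|].
  by move/(subsetP TA).
split.
  apply/asboolP; split.
  - move=> v vA; have vT : v \notin T by apply: contra vA; apply/subsetP.
    by rewrite mN // g1 // inE negb_and vA orbT.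
  - move=> v vA; rewrite inE; case vT: (v \in T); first by rewrite mT ?orbT.
    by rewrite mN ?vT // g'A ?vT.
  - move=> v vA; case vT: (v \in T); first by exists 1; rewrite /= mT.
    have vAT : v \in A :\: T by rewrite inE vT vA.
    have [k Hk] := g3 v vAT.
    clear vA vT vAT; elim: k v Hk => [|k IH] v Hk; first by exists 1; rewrite /= mT.
    case vT: (v \in T); first by exists 1; rewrite /= mT.
    have Hk' : iter k g' (g' v) \in T by rewrite -iterSr.
    have [m Hm] := IH (g' v) Hk'.
    by exists m.+1; rewrite iterSr mN ?vT.
apply/eqP/setP => v; rewrite inE; case vT: (v \in T).
  by rewrite mT // (subsetP TA).
case vA: (v \in A) => //=; rewrite mN ?vT //.
by rewrite (disjointFr dAS) // g'A ?vT.
Qed.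

Lemma card_fiber A S T : [disjoint A & S] -> T \subset A ->
  #|[set g in Acyc A S | Tg A S g == T]| = #|S| ^ #|T| * #|Acyc (A :\: T) T|.
Proof.
move=> dAS TA; rewrite fiber_eq // card_in_imset ?cardsX ?card_Fam //.
move=> [h1 g1] [h2 g2]; rewrite !in_setX !inE /=.
move=> /andP[/forallP F1 /asboolP[a1 _ _]] /andP[/forallP F2 /asboolP[b1 _ _]] /ffunP E.
congr pair; apply/ffunP => v; have := E v; rewrite !ffunE /=; case vT: (v \in T) => Ev //.
- by have := F1 v; have := F2 v; rewrite vT => /eqP-> /eqP->.
- by rewrite a1 ?b1 // inE vT.
Qed.

Lemma fiber0 A S : [disjoint A & S] -> A != set0 ->
  [set g in Acyc A S | Tg A S g == set0] = set0.
Proof.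
move=> dAS /set0Pn [v0 Hv0]; apply/setP => g; rewrite !inE.
apply/negP => /andP[/asboolP [g1 g2 g3] /eqP HT].
have [k Hk] := g3 v0 Hv0.
have : forall k v, v \in A -> iter k g v \in A.
  elim=> [//|k' IH] v vA; rewrite iterSr; apply: IH.
  have := g2 v vA; rewrite inE => /orP[//|gS].
  have : v \in Tg A S g by rewrite inE vA gS.
  by rewrite HT inE.
by move/(_ k v0 Hv0); rewrite (disjointFl dAS Hk).
Qed.

Lemma card_Acyc A S : [disjoint A & S] ->
  #|Acyc A S| = if #|A| == 0 then 1 else #|S| * (#|A| + #|S|) ^ (#|A|).-1.
Proof.
move Hm: #|A| => m; elim/ltn_ind: m A S Hm => m IH A S Hm dAS.
case: (m =P 0) => [m0|/eqP m0].
  move: Hm; rewrite m0 => Hm; have A0 := cards0_eq Hm; subst A.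
  have -> : Acyc set0 S = [set [ffun v => v]].
    apply/setP => g; rewrite inE in_set1; apply/asboolP/eqP => [[g1 _ _]|->].
      by apply/ffunP => v; rewrite ffunE g1 // inE.
    by split => v; rewrite ?inE // ffunE.
  by rewrite cards1.
rewrite (card_part (f := Tg A S) (P := powerset A)); last first.
  by move=> g _; rewrite powersetE; apply/subsetP => v; rewrite inE => /andP[].
rewrite (eq_bigr (fun T => Gf m #|S| #|T|)); last first.
  move=> T; rewrite powersetE => TA.
  case: (T =P set0) => [->|/eqP T0].
    by rewrite fiber0 ?cards0 // -card_gt0 Hm lt0n.
  rewrite card_fiber // (IH (m - #|T|)) //.
  - have t0 : #|T| != 0 by rewrite cards_eq0.
    have tm : #|T| <= m by rewrite -Hm subset_leq_card.
    by rewrite /Gf (negbTE t0) subnK.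
  - have := card_gt0 T; rewrite T0; move: m0; rewrite -lt0n; lia.
  - by rewrite cardsDS // Hm.
  - by rewrite disjoints_subset subsetDr.
by rewrite sum_subsets Hm acyc_identity // lt0n.
Qed.

End Acyc.


Definition bmax N (P : pred nat) := \max_(m < N | P m) m.

Lemma bmax_lt N (P : pred nat) : 0 < N -> bmax N P < N.
Proof.
case: N => // N _; rewrite ltnS; apply/bigmax_leqP => m _.
by rewrite -ltnS.
Qed.

Lemma bmax_P N (P : pred nat) : 0 < N -> P 0 -> P (bmax N P).
Proof.
case: N => // N _ P0; rewrite /bmax (bigmax_eq_arg ord0) //.
by case: arg_maxnP.
Qed.

Lemma bmax_next N (P : pred nat) : (bmax N P).+1 < N -> ~~ P (bmax N P).+1.
Proof.
move=> H; apply/negP => Pb.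
by have := leq_bigmax_cond (P := fun m : 'I_N => P m) (F := fun m : 'I_N => nat_of_ord m) (Ordinal H) Pb; rewrite -/(bmax N P) /=; lia.
Qed.

Lemma bmax_char N (P : pred nat) d : d < N -> P d -> (d.+1 < N -> ~~ P d.+1) ->
  (forall m m', m' <= m -> m < N -> P m -> P m') -> bmax N P = d.
Proof.
move=> dN Pd Pd1 Hdown; apply/eqP; rewrite eqn_leq; apply/andP; split.
  apply/bigmax_leqP => m Pm; rewrite leqNgt; apply/negP => dm.
  have d1N : d.+1 < N by apply: leq_ltn_trans (ltn_ord m).
  by move: (Pd1 d1N); rewrite (Hdown m d.+1 dm (ltn_ord m) Pm).
exact: (leq_bigmax_cond (P := fun m : 'I_N => P m) (F := fun m : 'I_N => nat_of_ord m) (Ordinal dN) Pd).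
Qed.

Section NatShape.
Variables (i j d : nat).
Hypothesis dmin : d <= minn i j.

Definition parN m := if m == i.+1 then d else m.-1.
Definition dlt m := if m <= i then m else m - i + d.
Definition eidx := if j == d then d else i + j - d.

Lemma parN_le m : parN m <= m.
Proof. rewrite /parN; case: eqP => [->|_]; lia. Qed.

Lemma dlt_par m : 0 < m -> dlt (parN m) = (dlt m).-1.
Proof.
move=> m0; rewrite /dlt /parN; case: eqP => [->|mi].
  by rewrite ltnn; move: dmin; rewrite leq_min => /andP[-> _]; lia.
case: (leqP m i) => H; first by rewrite (_ : m.-1 <= i) //; lia.
rewrite (_ : (m.-1 <= i) = false); lia.
Qed.

Lemma dlt0 m : (dlt m == 0) = (m == 0).
Proof. rewrite /dlt; case: leqP; lia. Qed.

Lemma iter_parN_le a m : iter a parN m <= m.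
Proof.
elim: a => //= a IH; exact: leq_trans (parN_le _) IH.
Qed.

Lemma dlt_iter a m : a <= dlt m -> dlt (iter a parN m) = dlt m - a.
Proof.
elim: a => [|a IH] Ha /=; first by rewrite subn0.
have H := IH (ltnW Ha).
have x0 : 0 < iter a parN m.
  by rewrite lt0n -dlt0 H; lia.
by rewrite dlt_par // H; lia.
Qed.

Lemma iter_dlt m : iter (dlt m) parN m = 0.
Proof. by apply/eqP; rewrite -dlt0 dlt_iter // subnn. Qed.

Lemma iter_dlt_neq b m : b < dlt m -> iter b parN m != 0.
Proof. by move=> H; rewrite -dlt0 dlt_iter ?(ltnW H) //; lia. Qed.

Lemma iter_low a m : m <= i -> iter a parN m = m - a.
Proof.
elim: a => [|a IH] mi /=; first by rewrite subn0.
rewrite IH // /parN; case: eqP; lia.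
Qed.

Lemma iter_high a m : i < m -> a <= m - i.+1 -> iter a parN m = m - a.
Proof.
elim: a => [|a IH] im Ha /=; first by rewrite subn0.
rewrite IH //; last lia.
rewrite /parN; case: eqP; lia.
Qed.

Lemma iter_high_d m : i < m -> iter (m - i) parN m = d.
Proof.
move=> im; have -> : m - i = (m - i.+1).+1 by lia.
by rewrite iterS iter_high // /parN; case: eqP; lia.
Qed.

Lemma dlt_i : dlt i = i.
Proof. by rewrite /dlt leqnn. Qed.

Lemma dlt_e : dlt eidx = j.
Proof.
move: dmin; rewrite leq_min => /andP[di dj].
rewrite /dlt /eidx; case: eqP => [->|jd]; first by rewrite di.
rewrite (_ : (i + j - d <= i) = false); lia.
Qed.

Lemma iter_e_d : iter (j - d) parN eidx = d.
Proof.
move: dmin; rewrite leq_min => /andP[di dj].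
rewrite /eidx; case: eqP => [->|jd]; first by rewrite subnn.
rewrite (_ : j - d = i + j - d - i); last lia.
by apply: iter_high_d; lia.
Qed.

Lemma iter_i_d : iter (i - d) parN i = d.
Proof.
move: dmin; rewrite leq_min => /andP[di dj].
by rewrite iter_low //; lia.
Qed.

End NatShape.

Lemma isdepth_iter n (p : {ffun 'I_n -> 'I_n}) r v c a :
  isdepth p r v c -> a <= c -> isdepth p r (iter a p v) (c - a).
Proof.
move=> [H1 H2] ac; split; first by rewrite -iterD subnK.
by move=> b Hb; rewrite -iterD; apply: H2; lia.
Qed.

Section Graft.
Variables (n i j d : nat).
Hypothesis dmin : d <= minn i j.
Local Notation k := (i + j - d).+1.
Local Notation KT := {ffun 'I_k -> 'I_n}.
Local Notation FT := {ffun 'I_n -> 'I_n}.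
Implicit Types (t : KT) (g : FT) (v : 'I_n).

Definition par (m : 'I_k) : 'I_k := inord (parN i d m).

Lemma par_val m : (par m : nat) = parN i d m.
Proof. by rewrite /par inordK // (leq_ltn_trans (parN_le dmin _)). Qed.

Lemma iter_par a m : (iter a par m : nat) = iter a (parN i d) (m : nat).
Proof. by elim: a => //= a <-; rewrite par_val. Qed.

Definition Graft (t : KT) (g : FT) : FT :=
  [ffun v => if [pick m | t m == v] is Some m then t (par m) else g v].

Definition St (t : KT) : {set 'I_n} := t @: [set: 'I_k].

Lemma Graft_t t g m : injective t -> Graft t g (t m) = t (par m).
Proof.
move=> inj; rewrite ffunE; case: pickP => [m' /eqP /inj -> //|/(_ m)].
by rewrite eqxx.
Qed.

Lemma Graft_out t g v : v \notin St t -> Graft t g v = g v.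
Proof.
move=> vS; rewrite ffunE; case: pickP => // m /eqP Hm.
by move: vS; rewrite -Hm imset_f ?inE.
Qed.

Lemma iter_Graft t g a m : injective t -> iter a (Graft t g) (t m) = t (iter a par m).
Proof. by move=> inj; elim: a => //= a ->; rewrite Graft_t. Qed.

Lemma Graft_depth t g m : injective t ->
  isdepth (Graft t g) (t ord0) (t m) (dlt i d m).
Proof.
move=> inj; split.
  rewrite iter_Graft //; congr (t _); apply: ord_inj; rewrite iter_par /=.
  exact: iter_dlt dmin _.
move=> b Hb; rewrite iter_Graft // => /inj /(congr1 (fun x : 'I_k => nat_of_ord x)); rewrite iter_par /=.
by apply/eqP; apply: iter_dlt_neq dmin _ _ Hb.
Qed.

Lemma Graft_rooted t g : injective t -> g \in Acyc (~: St t) (St t) ->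
  rootedP (Graft t g) (t ord0).
Proof.
move=> inj; rewrite inE => /asboolP [g1 g2 g3]; split.
  by rewrite Graft_t //; congr (t _); apply: ord_inj; rewrite par_val.
move=> v.
have [m Hm] : exists m, iter m (Graft t g) v \in St t.
  case vS: (v \in St t); first by exists 0.
  have vA : v \in ~: St t by rewrite inE vS.
  have [kk Hkk] := g3 v vA.
  elim: kk v vS {vA} Hkk => [|kk IH] v vS Hkk; first by rewrite /= vS in Hkk.
  have gvo : Graft t g v = g v by rewrite Graft_out ?vS.
  case gS: (g v \in St t); first by exists 1; rewrite /= gvo.
  have Hk' : iter kk g (g v) \in St t by rewrite -iterSr.
  have [m Hm] := IH (g v) gS Hk'.
  by exists m.+1; rewrite iterSr gvo.
case/imsetP: Hm => m' _ Hm'.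
exists (dlt i d m' + m); rewrite iterD Hm'.
by case: (Graft_depth g m' inj).
Qed.

Definition cond (y : FT * 'I_n * 'I_n * 'I_n) m :=
  iter (i - m) y.1.1.1 y.1.2 == iter (j - m) y.1.1.1 y.2.
Definition branch y := bmax (minn i j).+1 (cond y).

Lemma cond_down y m m' : m' <= m -> m < (minn i j).+1 -> cond y m -> cond y m'.
Proof.
move=> mm' mN /eqP H; apply/eqP.
rewrite (_ : i - m' = (m - m') + (i - m)); last lia.
rewrite (_ : j - m' = (m - m') + (j - m)); last lia.
by rewrite !iterD H.
Qed.

Definition Dom : {set KT * FT} :=
  [set x : KT * FT | injectiveb x.1 && (x.2 \in Acyc (~: St x.1) (St x.1))].
Definition Psi (x : KT * FT) : FT * 'I_n * 'I_n * 'I_n :=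
  (Graft x.1 x.2, x.1 ord0, x.1 (inord i), x.1 (inord (eidx i j d))).
Definition TRd := [set y in TR n i j | branch y == d].

Lemma vi : (inord i : 'I_k) = i :> nat.
Proof. by rewrite inordK //; lia. Qed.

Lemma ve : (inord (eidx i j d) : 'I_k) = eidx i j d :> nat.
Proof.
move: dmin; rewrite leq_min => /andP[di dj].
by rewrite inordK // /eidx; case: eqP; lia.
Qed.

Lemma Psi_in x : x \in Dom -> Psi x \in TRd.
Proof.
move: dmin; rewrite leq_min => /andP[di dj].
case: x => t g; rewrite inE /= => /andP[/injectiveP inj gA].
rewrite !inE; apply/andP; split.
  apply/asboolP; split; first exact: Graft_rooted.
  split.
    by have := Graft_depth g (inord i) inj; rewrite /= vi dlt_i.
  by have := Graft_depth g (inord (eidx i j d)) inj; rewrite /= ve (dlt_e dmin).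
apply/eqP; apply: bmax_char.
- by rewrite ltnS.
- rewrite /cond /= !iter_Graft //; apply/eqP; congr (t _); apply: ord_inj.
  by rewrite !iter_par vi ve (iter_i_d dmin) (iter_e_d dmin).
- move=> dN; rewrite /cond /= !iter_Graft // (inj_eq inj) -val_eqE /= !iter_par vi ve.
  have jd : j != d by move: dN; rewrite ltnS leq_min; lia.
  rewrite /eidx (negbTE jd) (iter_low dmin _ (leqnn i)).
  rewrite (iter_high dmin); [|lia|lia].
  move: dN; rewrite ltnS leq_min; lia.
- by move=> m m' mm' mN; apply: cond_down.
Qed.

Definition tN (y : FT * 'I_n * 'I_n * 'I_n) (m : nat) :=
  if m <= i then iter (i - m) y.1.1.1 y.1.2 else iter (i + j - d - m) y.1.1.1 y.2.

Definition Theta (y : FT * 'I_n * 'I_n * 'I_n) : KT * FT :=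
  let t := [ffun m : 'I_k => tN y m] in
  (t, [ffun v => if v \in St t then v else y.1.1.1 v]).

Lemma Theta_Psi x : x \in Dom -> Theta (Psi x) = x.
Proof.
move: dmin; rewrite leq_min => /andP[di dj].
case: x => t g; rewrite inE /= => /andP[/injectiveP inj gA].
have Ht : [ffun m : 'I_k => tN (Psi (t, g)) m] = t.
  apply/ffunP => m; rewrite ffunE /tN /=.
  case: leqP => mi; rewrite !iter_Graft //; congr (t _); apply: ord_inj;
    rewrite !iter_par ?vi ?ve.
    by rewrite (iter_low dmin) //; lia.
  have jd : j != d by have := ltn_ord m; lia.
  by have := ltn_ord m; rewrite /eidx (negbTE jd) (iter_high dmin); lia.
rewrite /Theta Ht; congr pair; apply/ffunP => v; rewrite ffunE.
case vS: (v \in St t); last by rewrite Graft_out ?vS.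
by move: gA; rewrite inE => /asboolP [g1 _ _]; rewrite g1 // inE vS.
Qed.

Lemma tN_facts y : y \in TRd ->
  [/\ rootedP y.1.1.1 y.1.1.2,
      forall m, m < k -> isdepth y.1.1.1 y.1.1.2 (tN y m) (dlt i d m),
      forall m1 m2, m1 < k -> m2 < k -> tN y m1 = tN y m2 -> m1 = m2,
      forall m, m < k -> y.1.1.1 (tN y m) = tN y (parN i d m) &
      [/\ tN y 0 = y.1.1.2, tN y i = y.1.2 & tN y (eidx i j d) = y.2]].
Proof.
move: dmin; rewrite leq_min => /andP[di dj].
case: y => [[[p r1] r2] r3]; rewrite !inE /= => /andP[/asboolP [rp [H2 H3]] /eqP Hb].
have N0 : 0 < (minn i j).+1 by [].
have Cd : cond (p, r1, r2, r3) d by rewrite -Hb; apply: bmax_P => //; rewrite /cond !subn0 (proj1 H2) (proj1 H3).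
have Cd1 : d < minn i j -> ~~ cond (p, r1, r2, r3) d.+1.
  by move=> H; rewrite -Hb; apply: bmax_next; move: Hb; rewrite /branch => ->; rewrite ltnS.
move/eqP: Cd => Cd; rewrite /= in Cd.
have Dm : forall m, m < k -> isdepth p r1 (tN (p, r1, r2, r3) m) (dlt i d m).
  move=> m mk; rewrite /tN /dlt /=; case: leqP => mi.
    by have := isdepth_iter H2 (leq_subr m i); rewrite subKn.
  have Hle : i + j - d - m <= j by lia.
  have -> : m - i + d = j - (i + j - d - m) by lia.
  exact: isdepth_iter H3 Hle.
have mixed : forall m1 m2, m1 < k -> m2 < k -> m1 <= i -> i < m2 ->
    tN (p, r1, r2, r3) m1 <> tN (p, r1, r2, r3) m2.
  move=> m1 m2 m1k m2k m1i m2i E.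
  have := isdepth_uniq (Dm _ m1k); rewrite E => /(_ _ (Dm _ m2k)).
  rewrite /dlt m1i leqNgt m2i /= => Em.
  have Cm1 : cond (p, r1, r2, r3) m1.
    move: E; rewrite /cond /tN /= m1i leqNgt m2i /= => ->.
    by rewrite (_ : i + j - d - m2 = j - m1) //; lia.
  have dm : d < minn i j by rewrite leq_min; lia.
  have := Cd1 dm; rewrite (cond_down (m := m1)) //; [lia|rewrite ltnS leq_min; lia].
split => //.
- move=> m1 m2 m1k m2k E.
  have := isdepth_uniq (Dm _ m1k); rewrite E => /(_ _ (Dm _ m2k)); rewrite /dlt.
  case: (leqP m1 i) => h1; case: (leqP m2 i) => h2 //; try lia.
  + by case: (mixed _ _ m1k m2k h1 h2 E).
  + by case: (mixed _ _ m2k m1k h2 h1 (esym E)).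
- move=> m mk; rewrite /tN /parN /=.
  case: (m =P 0) => [->|m0].
    by rewrite subn0 (proj1 H2) (proj1 rp).
  case: (m =P i.+1) mk => [->|mi1] mk.
    rewrite /= ?eqxx ?ltnn ?di Cd.
    by rewrite (_ : j - d = (i + j - d - i.+1).+1) //; lia.
  case: (leqP m i) => mi.
    rewrite (_ : m.-1 <= i); last lia.
    by rewrite (_ : i - m.-1 = (i - m).+1) //; lia.
  rewrite (_ : m.-1 <= i = false); last lia.
  by rewrite (_ : i + j - d - m.-1 = (i + j - d - m).+1) //; lia.
- split.
  + by rewrite /tN /= subn0 (proj1 H2).
  + by rewrite /tN /= leqnn subnn.
  + rewrite /tN /eidx /=; case: eqP => [jd|jd].
      by rewrite di Cd jd subnn.
    by rewrite (_ : i + j - d <= i = false) ?subnn //; lia.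
Qed.

Lemma Theta_in y : y \in TRd -> Theta y \in Dom.
Proof.
move=> Hy; have [rp Dm inj Hpar [H0 Hi He]] := tN_facts Hy.
set t := [ffun m : 'I_k => tN y m].
have injt : injective t.
  by move=> m1 m2; rewrite !ffunE => E; apply: ord_inj; exact: inj (ltn_ord _) (ltn_ord _) E.
rewrite inE /=; apply/andP; split; first exact/injectiveP.
rewrite inE; apply/asboolP; split.
- by move=> v; rewrite inE negbK ffunE => ->.
- by move=> v _; rewrite !inE orNb.
- move=> v _; case: rp => _ /(_ v) [kk Hkk].
  have r1S : y.1.1.2 \in St t by apply/imsetP; exists ord0; rewrite ?inE // ffunE H0.
  rewrite -Hkk in r1S; clear Hkk.
  elim: kk v r1S => [|kk IH] v Hv; first by exists 0.
  case vS: (v \in St t); first by exists 0.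
  have Hv' : iter kk y.1.1.1 (y.1.1.1 v) \in St t by rewrite -iterSr.
  have [m Hm] := IH _ Hv'.
  by exists m.+1; rewrite iterSr ffunE vS.
Qed.

Lemma Psi_Theta y : y \in TRd -> Psi (Theta y) = y.
Proof.
move=> Hy; have [rp Dm inj Hpar [H0 Hi He]] := tN_facts Hy.
case: y Hy rp Dm inj Hpar H0 Hi He => [[[p r1] r2] r3] Hy rp Dm inj Hpar H0 Hi He /=.
set t := [ffun m : 'I_k => tN (p, r1, r2, r3) m].
have injt : injective t.
  by move=> m1 m2; rewrite !ffunE => E; apply: ord_inj; exact: inj (ltn_ord _) (ltn_ord _) E.
rewrite /Psi /Theta /= -/t.
congr (_, _, _, _).
- apply/ffunP => v; case vS: (v \in St t).
    case/imsetP: vS => m _ ->; rewrite Graft_t // !ffunE par_val.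
    by rewrite Hpar.
  by rewrite Graft_out ?vS // ffunE vS.
- by rewrite ffunE H0.
- by rewrite ffunE vi Hi.
- by rewrite ffunE ve He.
Qed.

Lemma card_TRd : #|TRd| = #|Dom|.
Proof.
have -> : TRd = Psi @: Dom.
  apply/setP => y; apply/idP/imsetP.
    by move=> Hy; exists (Theta y); [exact: Theta_in | rewrite Psi_Theta].
  by case=> x Hx ->; exact: Psi_in.
apply: card_in_imset => x1 x2 H1 H2 E.
by rewrite -(Theta_Psi H1) -(Theta_Psi H2) E.
Qed.

Lemma card_Dom : #|Dom| = n ^_ k * (if n - k == 0 then 1 else k * n ^ (n - k).-1).
Proof.
rewrite (card_part (f := fst) (P := [set t : KT | injectiveb t])); last first.
  by case=> t g; rewrite !inE => /andP[].
rewrite (eq_bigr (fun _ => if n - k == 0 then 1 else k * n ^ (n - k).-1)).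
  by rewrite sum_nat_const card_inj_ffuns !card_ord.
move=> t; rewrite inE => /injectiveP inj.
have -> : [set x in Dom | x.1 == t] = (pair t) @: Acyc (~: St t) (St t).
  apply/setP => [[t' g]]; rewrite !inE /=; apply/andP/imsetP.
    by case=> /andP[_ gA] /eqP Et; subst t'; exists g; rewrite // inE.
  case=> g' gA [-> ->]; split => //; apply/andP; split; first exact/injectiveP.
  by rewrite inE in gA.
rewrite card_imset; last by move=> g1 g2 [].
rewrite card_Acyc; last by rewrite disjoints_subset.
have Sk : #|St t| = k by rewrite card_imset // cardsT card_ord.
have kn : k <= n by have := @leq_card _ _ t inj; rewrite !card_ord.
have Cn : #|~: St t| = n - k by have := cardsC (St t); rewrite Sk card_ord; lia.
by rewrite Cn Sk subnK.
Qed.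

End Graft.


Lemma card_TR_sum n i j :
  #|TR n i j| = \sum_(d < (minn i j).+1) #|TRd n i j d|.
Proof.
rewrite (card_part (f := fun y => (inord (branch i j y) : 'I_(minn i j).+1)) (P := setT)) //.
apply: eq_big => [d|d _]; first by rewrite inE.
apply: eq_card => y; rewrite !inE; congr (_ && _).
have bl : branch i j y < (minn i j).+1 by apply: bmax_lt.
apply/eqP/eqP => [<-|H]; first by rewrite inordK.
by apply: ord_inj; rewrite inordK // H.
Qed.

Lemma card_W_nat n i j :
  #|W n i j| = \sum_(d < (minn i j).+1)
     n ^_ (i + j - d).+1 * (if n - (i + j - d).+1 == 0 then 1
                            else (i + j - d).+1 * n ^ (n - (i + j - d).+1).-1).
Proof.
rewrite card_W_TR card_TR_sum; apply: eq_bigr => d _.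
have dmin : d <= minn i j by rewrite -ltnS.
by rewrite (card_TRd n dmin) (card_Dom n dmin).
Qed.

Local Open Scope ring_scope.
Import GRing.Theory Num.Theory.

Theorem theorem3 (n i j : nat) : (1 <= n)%N ->
  (#|W n i j|%:R : rat) = W_formula n i j.
Proof.
move=> n1; rewrite card_W_nat natr_sum /W_formula big_mkord; apply: eq_bigr => d _.
have dmin : (d <= minn i j)%N by rewrite -ltnS.
move: dmin; rewrite leq_min => /andP[di dj].
rewrite /=.
set k := (i + j - d).+1.
have -> : (i + j - d + 1)%N = k by rewrite addn1.
case: (leqP k n) => kn.
  have hm : (n%:Z - i%:Z - j%:Z + d%:Z - 1) = (n - k)%:Z by rewrite /k; lia.
  rewrite hm /=.
  have f0 : ((n - k)`!%:R : rat) != 0 by rewrite pnatr_eq0 -lt0n fact_gt0.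
  have nf : (n`!%:R : rat) = (n ^_ k)%:R * ((n - k)`!)%:R by rewrite -natrM ffact_fact.
  case: eqP => nk.
    have kn' : k = n by lia.
    rewrite nk /= exprN1 muln1 nf.
    have n0 : (n%:R : rat) != 0 by rewrite pnatr_eq0 -lt0n.
    rewrite kn' subnn fact0 mulr1n divr1 mulr1 [n%:R * _]mulrC mulfK //.
  have -> : ((n - k)%:Z - 1) = ((n - k).-1)%:Z by lia.
  rewrite -exprnP nf natrM natrM natrX.
  field.
  exact: f0.
rewrite ffact_small // mul0n.
have -> : (n%:Z - i%:Z - j%:Z + d%:Z - 1) = Negz (k - n).-1 by rewrite NegzE /k; lia.
by rewrite /= mulr0 mul0r.
Qed.
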